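(* Suppose (EDR) holds with $\beta>1$, $\mathcal H$ has embedding index $\alpha_0$ with $\frac1\beta\le\alpha_0<1$, and $f_\rho^*\in[\mathcal H]^s$ with $\|f_\rho^*\|_{[\mathcal H]^s}\le R$ for some $0<s\le\alpha_0$. Let $f_\nu=\varphi_\nu(T)S_k^*f_\rho^*$. Then for any $\nu>0$ and any $\alpha_0<\alpha\le1$, $$\|f_\nu\|_{L^\infty}\le M_\alpha E R\,\nu^{\frac{\alpha-s}{2}}.$$
   Context: $\mathcal X\subseteq\mathbb R^d$ compact, $\rho$ a distribution on $\mathcal X\times\mathcal Y$ with marginal $\mu$, $f_\rho^*(x)=\int y\,d\rho(y|x)$, $L^p=L^p(\mathcal X,\mu)$. $\mathcal H$ separable RKHS with continuous kernel $k$, $\sup_xk(x,x)\le\kappa^2$; $S_k:\mathcal H\to L^2$ inclusion, $L_k=S_kS_k^*=\sum_i\lambda_i\langle\cdot,e_i\rangle_{L^2}e_i$ ($\lambda_i$ positive non-increasing, $\{e_i\}$ ONB of $\overline{\operatorname{ran}S_k}$, $\{\lambda_i^{1/2}e_i\}$ ONB of $\mathcal H$), $T=S_k^*S_k$. $[\mathcal H]^s=\{\sum_ia_i\lambda_i^{s/2}e_i:(a_i)\in\ell^2\}$, $\|\sum a_i\lambda_i^{s/2}e_i\|_{[\mathcal H]^s}=\|(a_i)\|_{\ell^2}$. $M_\alpha$ is the smallest $A\ge0$ with $\sum_i\lambda_i^\alpha e_i(x)^2\le A^2$ $\mu$-a.e. ($=\infty$ if none), equal to the norm of $[\mathcal H]^\alpha\hookrightarrow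 L^\infty$. (EDR): $ci^{-\beta}\le\lambda_i\le Ci^{-\beta}$. Embedding index: $\alpha_0=\inf\{\alpha\in[\frac1\beta,1]:M_\alpha<\infty\}$. Filter function: $\varphi_\nu:[0,\kappa^2]\to\mathbb R^+$ with $\sup_zz^\alpha\varphi_\nu(z)\le E\nu^{1-\alpha}$ for all $\alpha\in[0,1]$ and, for some $\tau\ge1$, $\sup_z|1-z\varphi_\nu(z)|z^\alpha\le F_\tau\nu^{-\alpha}$ for $\alpha\in[0,\tau]$. *)

(* Defs.v *)
From HB Require Import structures.
From mathcomp Require Import all_boot all_order all_algebra.
From mathcomp Require Import all_classical all_reals all_analysis ess_sup_inf.
Set Implicit Arguments. Unset Strict Implicit. Unset Printing Implicit Defensive.
Import Order.TTheory GRing.Theory Num.Theory.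
Import numFieldNormedType.Exports.
Local Open Scope classical_set_scope.
Local Open Scope ring_scope.

(* Spectral data of the integral operator L_k on L^2(X, mu):
   lam : nat -> R (lam i = lambda_{i+1}), e : nat -> X -> R (e i = e_{i+1}).
   Elements of H are represented by their coordinates b (in l^2) in the
   ONB {lam_i^{1/2} e_i} of H. *)

Definition Sk {X : Type} {R : realType} (lam : nat -> R) (e : nat -> X -> R)
  (b : nat -> R) : X -> R :=
  fun x => limn (fun n => \sum_(0 <= i < n) b i * Num.sqrt (lam i) * e i x).

(* S_k^* : L^2 -> H, in coordinates:
   <S_k^* f, lam_i^{1/2} e_i>_H = <f, lam_i^{1/2} e_i>_{L^2} *)
Definition Sk_adj {d} {X : measurableType d} {R : realType}
  (mu : {measure set X -> \bar R}) (lam : nat -> R) (e : nat -> X -> R)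
  (f : X -> R) : nat -> R :=
  fun i => Num.sqrt (lam i) * Rintegral mu setT (fun x => f x * e i x).

(* Functional calculus: T = S_k^* S_k acts diagonally on the ONB
   {lam_i^{1/2} e_i} of H with eigenvalues lam_i, so phi(T) multiplies the
   i-th coordinate by phi(lam_i). *)
Definition fun_calc {R : realType} (lam : nat -> R) (phi : R -> R)
  (b : nat -> R) : nat -> R :=
  fun i => phi (lam i) * b i.

Definition f_nu {d} {X : measurableType d} {R : realType}
  (mu : {measure set X -> \bar R}) (lam : nat -> R) (e : nat -> X -> R)
  (phi : R -> R -> R) (nu : R) (f : X -> R) : X -> R :=
  Sk lam e (fun_calc lam (phi nu) (Sk_adj mu lam e f)).

Definition Linf_norm {d} {X : measurableType d} {R : realType}
  (mu : {measure set X -> \bar R}) (f : X -> R) : \bar R :=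
  ess_sup mu (fun x => (`|f x|)%:E).

(* M_alpha: smallest A >= 0 with sum_i lam_i^alpha e_i(x)^2 <= A^2 mu-a.e.
   (+oo if there is none) *)
Definition M_emb {d} {X : measurableType d} {R : realType}
  (mu : {measure set X -> \bar R}) (lam : nat -> R) (e : nat -> X -> R)
  (alpha : R) : \bar R :=
  ereal_inf [set (A%:E) | A in [set A : R | 0 <= A /\
     (\forall x \ae mu,
        (\sum_(0 <= i <oo) ((lam i `^ alpha) * e i x ^+ 2)%:E <= (A ^+ 2)%:E)%E)]].

Definition emb_index {d} {X : measurableType d} {R : realType}
  (mu : {measure set X -> \bar R}) (lam : nat -> R) (e : nat -> X -> R)
  (beta : R) : R :=
  inf [set alpha : R | beta^-1 <= alpha <= 1 /\ (M_emb mu lam e alpha < +oo)%E].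

Definition in_Hs_ball {d} {X : measurableType d} {R : realType}
  (mu : {measure set X -> \bar R}) (lam : nat -> R) (e : nat -> X -> R)
  (s Rad : R) (f : X -> R) : Prop :=
  measurable_fun setT f /\
  exists a : nat -> R,
    (\sum_(0 <= i <oo) ((a i) ^+ 2)%:E <= (Rad ^+ 2)%:E)%E /\
    ((fun n => (\int[mu]_x
        ((f x - \sum_(0 <= i < n) a i * lam i `^ (s / 2) * e i x) ^+ 2)%:E)%E)
       @ \oo --> 0%E).

(* Main.v *)
Require Import Defs.
From HB Require Import structures.
From mathcomp Require Import all_boot all_order all_algebra.
From mathcomp Require Import all_classical all_reals all_analysis ess_sup_inf measurable_realfun.
From mathcomp Require Import ring lra.
From mathcomp Require Import measurable_realfun.
Import Order.TTheory GRing.Theory Num.Theory.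
Import numFieldNormedType.Exports.
Local Open Scope classical_set_scope.
Local Open Scope ring_scope.

Lemma amgm (R : realFieldType) (t x y : R) : 0 < t ->
  `|x * y| <= (t * x^+2 + t^-1 * y^+2) / 2.
Proof.
move=> t0; rewrite normrM.
have -> : x ^+ 2 = `|x| ^+ 2 by rewrite real_normK ?num_real.
have -> : y ^+ 2 = `|y| ^+ 2 by rewrite real_normK ?num_real.
move: (`|x|) (`|y|) => u v.
have w0 : 0 < t^-1 by rewrite invr_gt0.
have tw : t * t^-1 = 1 by rewrite mulfV // gt_eqF.
have h : 0 <= t^-1 * (t * u - v) ^+ 2 by apply: mulr_ge0; [exact: ltW | exact: sqr_ge0].
have e : t^-1 * (t * u - v) ^+ 2 = (t * t^-1) * (t * u^+2) - 2 * (t * t^-1) * (u * v) + t^-1 * v ^+ 2 by ring.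
rewrite tw in e. lra.
Qed.

Lemma le0_small (R : realFieldType) (x c : R) : 0 <= c ->
  (forall t, 0 < t -> x <= t * c) -> x <= 0.
Proof.
move=> c0 H; rewrite leNgt; apply/negP => x0.
have c1 : 0 < c + 1 by lra.
have := H (x / (c + 1)) (divr_gt0 x0 c1).
have -> : x / (c + 1) * c = x - x / (c + 1).
  by field; rewrite gt_eqF.
have : 0 < x / (c + 1) by rewrite divr_gt0.
lra.
Qed.

Lemma amgm_inf (R : realFieldType) (x p q : R) : 0 <= p -> 0 <= q ->
  (forall t, 0 < t -> x <= (t * p^+2 + t^-1 * q^+2) / 2) -> x <= p * q.
Proof.
move=> p0 q0 H.
have [p00|pp] := eqVneq p 0.
  rewrite p00 mul0r; apply: (@le0_small _ _ (q ^+ 2 / 2)).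
    by rewrite divr_ge0 ?sqr_ge0.
  move=> t t0; have := H t^-1; rewrite invr_gt0 => /(_ t0).
  rewrite p00 invrK; lra.
have [q00|qq] := eqVneq q 0.
  rewrite q00 mulr0; apply: (@le0_small _ _ (p ^+ 2 / 2)).
    by rewrite divr_ge0 ?sqr_ge0.
  move=> t t0; have := H t t0; rewrite q00; lra.
have pg : 0 < p by rewrite lt_neqAle eq_sym pp p0.
have qg : 0 < q by rewrite lt_neqAle eq_sym qq q0.
have := H (q / p) (divr_gt0 qg pg).
have -> : (q / p * p ^+ 2 + (q / p)^-1 * q ^+ 2) / 2 = p * q.
  by field; rewrite gt_eqF.
by [].
Qed.

Section IntHelp.
Context {d} {T : measurableType d} {R : realType} (mu : {measure set T -> \bar R}).

Lemma sq_int (g : T -> R) : measurable_fun setT g ->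
  (\int[mu]_x (g x ^+ 2)%:E < +oo)%E ->
  mu.-integrable setT (EFin \o (fun x => g x ^+ 2)).
Proof.
move=> mg lt; apply/integrableP; split.
  by apply/measurable_EFinP; exact: measurable_funM.
rewrite (eq_integral (fun x => (g x ^+ 2)%:E)) //.
by move=> x _ /=; rewrite ger0_norm // sqr_ge0.
Qed.

Lemma mul_int (g h : T -> R) : measurable_fun setT g -> measurable_fun setT h ->
  mu.-integrable setT (EFin \o (fun x => g x ^+ 2)) ->
  mu.-integrable setT (EFin \o (fun x => h x ^+ 2)) ->
  mu.-integrable setT (EFin \o (fun x => g x * h x)).
Proof.
move=> mg mh ig ih; apply/integrableP; split.
  by apply/measurable_EFinP; exact: measurable_funM.
have igh := integrableD measurableT ig ih.
apply: (@le_lt_trans _ _ (\int[mu]_x ((g x ^+ 2)%:E + (h x ^+ 2)%:E))%E).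
  apply: ge0_le_integral => //.
  - apply: measurableT_comp => //; apply/measurable_EFinP; exact: measurable_funM.
  - apply: emeasurable_funD; apply/measurable_EFinP; exact: measurable_funM.
  - move=> x _ /=; rewrite -EFinD lee_fin.
    have := @amgm R 1 (g x) (h x) ltr01; rewrite invr1 !mul1r.
    have := sqr_ge0 (g x); have := sqr_ge0 (h x); lra.
move/integrableP: igh => [_]; apply: le_lt_trans.
apply: ge0_le_integral => //.
- move=> x _; apply: adde_ge0; rewrite lee_fin sqr_ge0 //.
- apply: emeasurable_funD; apply/measurable_EFinP; exact: measurable_funM.
- apply: measurableT_comp => //; apply: emeasurable_funD; apply/measurable_EFinP; exact: measurable_funM.
- by move=> x _; exact: lee_abs.
Qed.


Variables (e : nat -> T -> R) (He_meas : forall i, measurable_fun setT (e i))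
  (He_orth : forall i j,
     (\int[mu]_x (e i x * e j x)%:E = (if i == j then 1 else 0)%:E)%E).

Lemma esq_int i : mu.-integrable setT (EFin \o (fun x => e i x ^+ 2)).
Proof.
apply: sq_int => //.
rewrite (eq_integral (fun x => (e i x * e i x)%:E)); last by move=> x _; rewrite expr2.
by rewrite He_orth eqxx ltry.
Qed.

Lemma ee_int i j : mu.-integrable setT (EFin \o (fun x => e i x * e j x)).
Proof. exact: mul_int (esq_int i) (esq_int j). Qed.

Lemma ee_Rint i j : Rintegral mu setT (fun x => e i x * e j x) = if i == j then 1 else 0.
Proof. by rewrite /Rintegral He_orth; case: (i == j). Qed.

Lemma P_int (c : nat -> R) i n :
  mu.-integrable setT (EFin \o (fun x => (\sum_(0 <= j < n) c j * e j x) * e i x)) /\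
  Rintegral mu setT (fun x => (\sum_(0 <= j < n) c j * e j x) * e i x) =
    if (i < n)%N then c i else 0.
Proof.
elim: n => [|n [IHi IHr]].
  have E0 : (fun x => (\sum_(0 <= j < 0) c j * e j x) * e i x) = (fun=> 0).
    by apply/funext => x; rewrite big_geq // mul0r.
  rewrite E0; split; first exact: integrable0.
  by rewrite Rintegral_cst // mul0r.
have E1 : (fun x => (\sum_(0 <= j < n.+1) c j * e j x) * e i x) =
  (fun x => (\sum_(0 <= j < n) c j * e j x) * e i x + c n * (e n x * e i x)).
  by apply/funext => x; rewrite big_nat_recr //= mulrDl mulrA.
rewrite E1.
have I2 : mu.-integrable setT (EFin \o (fun x => c n * (e n x * e i x))).
  apply: (eq_integrable measurableT (fun x => (c n)%:E * (e n x * e i x)%:E)%E).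
    by move=> x _.
  exact: integrableZl (ee_int n i).
split.
  apply: (eq_integrable measurableT ((EFin \o (fun x => (\sum_(0 <= j < n) c j * e j x) * e i x)%R) \+ (EFin \o (fun x => c n * (e n x * e i x))%R))%E).
    by move=> x _.
  exact: integrableD.
rewrite RintegralD // IHr RintegralZl //; last exact: ee_int.
rewrite ee_Rint.
have [->|ni] := eqVneq n i; first by rewrite ltnn ltnSn mulr1 add0r.
have ni' : (i == n) = false by rewrite eq_sym (negbTE ni).
by rewrite mulr0 addr0 ltnS (leq_eqVlt i n) ni'.
Qed.

Lemma coef_eq (f : T -> R) (c : nat -> R) : measurable_fun setT f ->
  (fun n => \int[mu]_x ((f x - \sum_(0 <= j < n) c j * e j x) ^+ 2)%:E)%E @ \oo --> 0%E ->
  forall i, Rintegral mu setT (fun x => f x * e i x) = c i.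
Proof.
move=> mf cv i.
suff H : forall eta, 0 < eta -> `|Rintegral mu setT (fun x => f x * e i x) - c i| <= eta.
  apply/eqP; rewrite -subr_eq0 -normr_le0; apply: (@le0_small _ _ 1) => // t t0.
  by rewrite mulr1; exact: H.
move=> eta eta0.
have /fine_cvgP [fin cvr] := cv.
have e20 : 0 < eta ^+ 2 by rewrite exprn_gt0.
have [n [[fn en] lt_in]] : exists n,
   ((\int[mu]_x ((f x - \sum_(0 <= j < n) c j * e j x) ^+ 2)%:E)%E \is a fin_num /\
    `|fine (\int[mu]_x ((f x - \sum_(0 <= j < n) c j * e j x) ^+ 2)%:E)%E| <= eta ^+ 2) /\ (i < n)%N.
  apply: (@filter_ex _ \oo); near=> n; split; [split|].
  - by near: n; exact: fin.
  - by near: n; exact: (cvgr0_norm_le _ cvr _ e20).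
  - by near: n; exact: nbhs_infty_gt.
set g := fun x => f x - \sum_(0 <= j < n) c j * e j x.
have mg : measurable_fun setT g.
  apply: measurable_funB => //; apply: measurable_sum => j.
  exact: (measurable_funM (measurable_cst _) (He_meas j)).
have ig2 : mu.-integrable setT (EFin \o (fun x => g x ^+ 2)).
  apply: sq_int => //; rewrite -ge0_fin_numE //.
  by apply: integral_ge0 => x _; rewrite lee_fin sqr_ge0.
have ige := mul_int _ _ mg (He_meas i) ig2 (esq_int i).
have [iP rP] := P_int c i n.
rewrite lt_in in rP.
have -> : Rintegral mu setT (fun x => f x * e i x) =
   Rintegral mu setT (fun x => g x * e i x) + Rintegral mu setT (fun x => (\sum_(0 <= j < n) c j * e j x) * e i x).
  rewrite -RintegralD //; apply: eq_Rintegral => x _.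
  by rewrite /g mulrBl subrK.
rewrite rP addrK.
set t := eta^-1.
have t0 : 0 < t by rewrite invr_gt0.
have iabs : mu.-integrable setT (EFin \o (fun x => `|g x * e i x|)).
  apply: (eq_integrable measurableT (abse \o (EFin \o (fun x => g x * e i x)))) => //.
  exact: integrable_abse.
have iZ1 : mu.-integrable setT (EFin \o (fun x => (t / 2) * g x ^+ 2)).
  apply: (eq_integrable measurableT (fun x => (t / 2)%:E * (g x ^+ 2)%:E)%E) => //.
  exact: integrableZl.
have iZ2 : mu.-integrable setT (EFin \o (fun x => (t^-1 / 2) * e i x ^+ 2)).
  apply: (eq_integrable measurableT (fun x => (t^-1 / 2)%:E * (e i x ^+ 2)%:E)%E) => //.
  exact: integrableZl (esq_int i).
apply: (le_trans (le_normr_Rintegral measurableT ige)).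
apply: (@le_trans _ _ (Rintegral mu setT (fun x => (t / 2) * g x ^+ 2 + (t^-1 / 2) * e i x ^+ 2))).
  apply: le_Rintegral => //.
    apply: (eq_integrable measurableT ((EFin \o (fun x => (t / 2) * g x ^+ 2)%R) \+ (EFin \o (fun x => (t^-1 / 2) * e i x ^+ 2)%R))%E) => //.
    exact: integrableD.
  move=> x _; have := @amgm R t (g x) (e i x) t0; lra.
rewrite RintegralD // RintegralZl // RintegralZl //; last exact: esq_int.
have -> : Rintegral mu setT (fun x => e i x ^+ 2) = 1.
  have := ee_Rint i i; rewrite eqxx => <-; apply: eq_Rintegral => x _; by rewrite expr2.
have ge0 : 0 <= Rintegral mu setT (fun x => g x ^+ 2).
  by apply: Rintegral_ge0 => x _; exact: sqr_ge0.
have le2 : Rintegral mu setT (fun x => g x ^+ 2) <= eta ^+ 2.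
  by move: en; rewrite ger0_norm.
have tt : t * eta ^+ 2 = eta by rewrite /t expr2 mulrA mulVf ?mul1r // gt_eqF.
have tK : t^-1 = eta by rewrite invrK.
rewrite tK.
have : t * Rintegral mu setT (fun x => g x ^+ 2) <= t * eta ^+ 2 by rewrite ler_wpM2l // ltW.
rewrite tt; lra.
Unshelve. all: by end_near.
Qed.

End IntHelp.

Lemma partial_le_lim (R : realType) (u : nat -> R) l : (forall n, 0 <= u n) ->
  (fun n => \sum_(0 <= j < n) u j) @ \oo --> l ->
  forall n, \sum_(0 <= j < n) u j <= l.
Proof.
move=> u0 cv n.
have nd : {homo (fun n => \sum_(0 <= j < n) u j) : n m / (n <= m)%N >-> n <= m}.
  move=> p q pq /=; rewrite (big_cat_nat (leq0n p) pq) /= lerDl.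
  by apply: sumr_ge0 => j _.
have := nondecreasing_cvgn_le nd (cvgP _ cv) n.
by rewrite (cvg_lim _ cv).
Qed.

Lemma lam_le_kappa {d} {T : measurableType d} {R : realType} (mu : probability T R)
  (k : T -> T -> R) (kappa : R) (lam : nat -> R) (e : nat -> T -> R)
  (Hlam_pos : forall i, 0 < lam i)
  (He_meas : forall i, measurable_fun setT (e i))
  (He_orth : forall i j,
     (\int[mu]_x (e i x * e j x)%:E = (if i == j then 1 else 0)%:E)%E)
  (Hk : forall x y,
     (fun n => \sum_(0 <= i < n) lam i * e i x * e i y) @ \oo --> k x y)
  (Hkappa : forall x, k x x <= kappa ^+ 2) i : lam i <= kappa ^+ 2.
Proof.
have pt : forall x, lam i * e i x ^+ 2 <= kappa ^+ 2.
  move=> x; apply: le_trans (Hkappa x).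
  have h : forall n, 0 <= lam n * e n x * e n x.
    by move=> n; rewrite -mulrA; apply: mulr_ge0; [exact: ltW | rewrite -expr2; exact: sqr_ge0].
  have := @partial_le_lim R (fun n => lam n * e n x * e n x) (k x x) h (Hk x x) i.+1.
  apply: le_trans.
  rewrite big_nat_recr //= expr2 mulrA lerDr; apply: sumr_ge0 => j _; exact: h.
have ie := @esq_int _ _ _ mu e He_meas He_orth i.
rewrite -lee_fin.
have -> : (lam i)%:E = (\int[mu]_x ((lam i)%:E * (e i x ^+ 2)%:E))%E.
  rewrite integralZl //.
  rewrite (eq_integral (fun x => (e i x * e i x)%:E)); last by move=> x _; rewrite expr2.
  by rewrite He_orth eqxx mule1.
apply: (@le_trans _ _ (\int[mu]_x (cst (kappa ^+ 2)%:E x))%E).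
  apply: ge0_le_integral => //.
  - by move=> x _; rewrite -EFinM lee_fin; apply: mulr_ge0; [exact: ltW | exact: sqr_ge0].
  - by apply/measurable_EFinP; apply: measurable_funM => //; exact: measurable_funM.
  - by move=> x _; rewrite -EFinM lee_fin pt.
rewrite integral_cst //; set m := (X in (_ * X)%E); have -> : m = 1%E by exact: probability_setT.
by rewrite mule1.
Qed.

Lemma w_bound (R : realType) (phi : R -> R -> R) (E kappa nu alpha s z y : R) :
  0 < nu -> 0 < z -> z <= kappa ^+ 2 -> 0 < s -> s <= alpha -> alpha <= 1 ->
  (forall nu z, 0 < nu -> 0 <= z <= kappa ^+ 2 -> 0 <= phi nu z) ->
  (forall nu a z, 0 < nu -> 0 <= a <= 1 -> 0 <= z <= kappa ^+ 2 ->
     z `^ a * phi nu z <= E * nu `^ (1 - a)) ->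
  (phi nu z * z * z `^ (s / 2) * y) ^+ 2 <=
    (E * nu `^ ((alpha - s) / 2)) ^+ 2 * (z `^ alpha * y ^+ 2).
Proof.
move=> nu0 z0 zk s0 sa a1 Hpos Hphi1.
set b := 1 + s / 2 - alpha / 2.
have hb : 0 <= b <= 1 by apply/andP; split; rewrite /b; lra.
have hz : 0 <= z <= kappa ^+ 2 by apply/andP; split => //; exact: ltW.
have h1 := Hphi1 nu b z nu0 hb hz.
have e1b : 1 - b = (alpha - s) / 2 by rewrite /b; ring.
rewrite e1b in h1.
have zn0 : (z != 0) by rewrite gt_eqF.
have spl : z * z `^ (s / 2) = z `^ b * z `^ (alpha / 2).
  rewrite -powRD ?zn0 ?implybT // -{1}(powRr1 (ltW z0)) -powRD ?zn0 ?implybT //.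
  have -> : b + alpha / 2 = 1 + s / 2 by rewrite /b; ring.
  by [].
have sq : z `^ (alpha / 2) ^+ 2 = z `^ alpha.
  rewrite expr2 -powRD ?zn0 ?implybT //.
  have -> : alpha / 2 + alpha / 2 = alpha by field.
  by [].
rewrite -(mulrA (phi nu z) z) spl -sq.
have p0 : 0 <= z `^ b * phi nu z.
  by apply: mulr_ge0; [exact: powR_ge0 | exact: Hpos].
move: (z `^ b) (z `^ (alpha / 2)) (phi nu z) p0 h1 => P Q ph p0 h1.
have -> : (ph * (P * Q) * y) ^+ 2 = (P * ph) ^+ 2 * (Q ^+ 2 * y ^+ 2) by ring.
apply: ler_wpM2r; first by apply: mulr_ge0; exact: sqr_ge0.
by rewrite !expr2; apply: ler_pM.
Qed.

Lemma sum_bound (R : realType) (a w : nat -> R) (Rad K A : R) n :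
  0 <= Rad -> 0 <= K -> 0 <= A ->
  (forall n, \sum_(0 <= i < n) a i ^+ 2 <= Rad ^+ 2) ->
  (forall n, \sum_(0 <= i < n) w i ^+ 2 <= K ^+ 2 * A ^+ 2) ->
  \sum_(0 <= i < n) `|a i * w i| <= Rad * (K * A).
Proof.
move=> R0 K0 A0 ha hw; apply: amgm_inf => //; first exact: mulr_ge0.
move=> t t0.
apply: le_trans; first by apply: ler_sum => i _; exact: (@amgm R t (a i) (w i) t0).
rewrite -mulr_suml big_split /= -!mulr_sumr.
have t1 : 0 < t^-1 by rewrite invr_gt0.
have := ha n; have := hw n; rewrite exprMn.
move: (\sum_(0 <= i < n) a i ^+ 2) (\sum_(0 <= i < n) w i ^+ 2) => sa sw h2 h1.
have : t * sa <= t * Rad ^+ 2 by rewrite ler_wpM2l // ltW.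
have : t^-1 * sw <= t^-1 * (K ^+ 2 * A ^+ 2) by rewrite ler_wpM2l // ltW.
lra.
Qed.

Lemma abs_series_bound (R : realType) (u : nat -> R) B :
  (forall n, \sum_(0 <= i < n) `|u i| <= B) ->
  cvgn (fun n => \sum_(0 <= i < n) u i) /\
  `|limn (fun n => \sum_(0 <= i < n) u i)| <= B.
Proof.
move=> hB.
have nd : {homo (fun n => \sum_(0 <= j < n) `|u j|) : n m / (n <= m)%N >-> n <= m}.
  move=> p q pq /=; rewrite (big_cat_nat (leq0n p) pq) /= lerDl.
  by apply: sumr_ge0 => j _.
have cvn : cvgn [normed series u].
  apply: nondecreasing_is_cvgn; first exact: nd.
  by exists B => _ [n _ <-]; exact: hB.
have cv : cvgn (fun n => \sum_(0 <= i < n) u i) by exact: normed_cvg cvn.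
split => //.
have hb : forall n, `|\sum_(0 <= i < n) u i| <= B.
  by move=> n; apply: le_trans (hB n); exact: ler_norm_sum.
rewrite ler_norml; apply/andP; split.
  apply: limr_ge => //; apply: nearW => n.
  by have := hb n; rewrite ler_norml => /andP[].
apply: limr_le => //; apply: nearW => n.
by have := hb n; rewrite ler_norml => /andP[].
Qed.

Theorem lemma7 (R : realType) (d : measure_display) (X : measurableType d)
  (mu : probability X R)
  (k : X -> X -> R) (kappa : R)
  (lam : nat -> R) (e : nat -> X -> R)
  (* spectral data of L_k: positive, non-increasing eigenvalues *)
  (Hlam_pos : forall i, 0 < lam i)
  (Hlam_noninc : forall i j, (i <= j)%N -> lam j <= lam i)
  (* e_i measurable and orthonormal in L^2(mu) *)
  (He_meas : forall i, measurable_fun setT (e i))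
  (He_orth : forall i j,
     (\int[mu]_x (e i x * e j x)%:E = (if i == j then 1 else 0)%:E)%E)
  (* Mercer expansion of k, i.e. {lam_i^{1/2} e_i} is an ONB of H *)
  (Hk : forall x y,
     (fun n => \sum_(0 <= i < n) lam i * e i x * e i y) @ \oo --> k x y)
  (Hkappa : forall x, k x x <= kappa ^+ 2)
  (* (EDR) with beta > 1 *)
  (beta : R) (Hbeta : 1 < beta)
  (HEDR : exists c C : R, 0 < c /\ 0 < C /\ forall i : nat,
     c * (i.+1%:R) `^ (- beta) <= lam i <= C * (i.+1%:R) `^ (- beta))
  (* embedding index alpha0 with 1/beta <= alpha0 < 1 *)
  (alpha0 : R) (Halpha0 : alpha0 = emb_index mu lam e beta)
  (Halpha0_rng : beta^-1 <= alpha0 < 1)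
  (* filter function phi_nu (z) = phi nu z *)
  (phi : R -> R -> R) (E : R) (tau F_tau : R) (Htau : 1 <= tau)
  (Hphi_pos : forall nu z, 0 < nu -> 0 <= z <= kappa ^+ 2 -> 0 <= phi nu z)
  (Hphi1 : forall nu a z, 0 < nu -> 0 <= a <= 1 -> 0 <= z <= kappa ^+ 2 ->
     z `^ a * phi nu z <= E * nu `^ (1 - a))
  (Hphi2 : forall nu a z, 0 < nu -> 0 <= a <= tau -> 0 <= z <= kappa ^+ 2 ->
     `|1 - z * phi nu z| * z `^ a <= F_tau * nu `^ (- a))
  (* source condition *)
  (f_rho : X -> R) (s Rad : R) (HRad : 0 <= Rad) (Hs : 0 < s <= alpha0)
  (Hf : in_Hs_ball mu lam e s Rad f_rho) :
  forall (nu alpha : R), 0 < nu -> alpha0 < alpha <= 1 ->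
  (Linf_norm mu (f_nu mu lam e phi nu f_rho)
     <= M_emb mu lam e alpha * (E * Rad * nu `^ ((alpha - s) / 2))%:E)%E.
Proof.
move=> nu alpha nu0 /andP[a0lt a1].
case/andP: Hs => s0 sa0.
have sa : s <= alpha by apply: le_trans sa0 (ltW a0lt).
case: Hf => mf [a [Ha2 Hacv]].
have coef : forall i, Rintegral mu setT (fun x => f_rho x * e i x) = a i * lam i `^ (s / 2).
  move=> i.
  exact: (@coef_eq _ _ _ mu e He_meas He_orth f_rho (fun j => a j * lam j `^ (s / 2)) mf Hacv i).
have lamk : forall i, lam i <= kappa ^+ 2.
  by move=> i; exact: (@lam_le_kappa _ _ _ mu k kappa lam e Hlam_pos He_meas He_orth Hk Hkappa i).
set K := E * nu `^ ((alpha - s) / 2).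
set w := fun i x => phi nu (lam i) * lam i * lam i `^ (s / 2) * e i x.
have fnuE : forall x, f_nu mu lam e phi nu f_rho x =
    limn (fun n => \sum_(0 <= i < n) a i * w i x).
  move=> x; rewrite /f_nu /Sk /fun_calc /Sk_adj; congr (limn _); apply/funext => n.
  apply: eq_bigr => i _; rewrite coef /w.
  have hs := sqr_sqrtr (ltW (Hlam_pos i)).
  transitivity (a i * (phi nu (lam i) * (Num.sqrt (lam i) ^+ 2) * lam i `^ (s / 2) * e i x)).
    by ring.
  by rewrite hs.
have E0 : 0 <= E.
  have := Hphi1 nu 0 0 nu0.
  rewrite lexx ler01 sqr_ge0 powRr0 mul1r subr0 powRr1 ?(ltW nu0) //.
  move=> /(_ isT isT) h.
  have := Hphi_pos nu 0 nu0; rewrite lexx sqr_ge0 => /(_ isT) h0.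
  have : 0 <= E * nu by apply: le_trans h.
  by rewrite pmulr_lge0.
have K0 : 0 <= K by apply: mulr_ge0 => //; exact: powR_ge0.
have wb : forall i x, w i x ^+ 2 <= K ^+ 2 * (lam i `^ alpha * e i x ^+ 2).
  move=> i x; exact: (@w_bound R phi E kappa nu alpha s (lam i) (e i x) nu0 (Hlam_pos i) (lamk i) s0 sa a1 Hphi_pos Hphi1).
have ha : forall n, \sum_(0 <= i < n) a i ^+ 2 <= Rad ^+ 2.
  move=> n; rewrite -lee_fin -sumEFin; apply: le_trans Ha2.
  by apply: nneseries_lim_ge => i _ _; rewrite lee_fin sqr_ge0.
set c := E * Rad * nu `^ ((alpha - s) / 2).
have c0 : 0 <= c by apply: mulr_ge0; [exact: mulr_ge0 | exact: powR_ge0].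
have [cz|cpos] : c = 0 \/ 0 < c.
  by move: c0; rewrite le_eqVlt => /orP[/eqP <-|->]; [left|right].
  have tz : forall i x, a i * w i x = 0.
    move: cz; rewrite /c => /eqP; rewrite !mulf_eq0 => /orP[/orP[/eqP Ez|/eqP Rz]|/eqP pz].
    - move=> i x; have := wb i x; rewrite /K Ez mul0r expr0n /= mul0r.
      move=> h.
      have : w i x ^+ 2 == 0 by rewrite eq_le h sqr_ge0.
      by rewrite sqrf_eq0 => /eqP ->; rewrite mulr0.
    - move=> i x; have := ha i.+1; rewrite Rz expr0n /= big_nat_recr //=.
      move=> h.
      have : a i ^+ 2 <= 0.
        apply: le_trans h; rewrite lerDr; apply: sumr_ge0 => j _; exact: sqr_ge0.
      move=> h2; have : a i ^+ 2 == 0 by rewrite eq_le h2 sqr_ge0.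
      by rewrite sqrf_eq0 => /eqP ->; rewrite mul0r.
    - by move: (powR_gt0 ((alpha - s) / 2) nu0); rewrite pz ltxx.
  have fz : forall x, f_nu mu lam e phi nu f_rho x = 0.
    move=> x; rewrite fnuE.
    have -> : (fun n => \sum_(0 <= i < n) a i * w i x) = fun=> 0.
      by apply/funext => n; rewrite big1 // => i _; exact: tz.
    exact: lim_cst.
  rewrite cz mule0; apply/ess_supP; apply: nearW => x.
  by rewrite fz normr0.
set S := [set A : R | 0 <= A /\
     (\forall x \ae mu,
        (\sum_(0 <= i <oo) ((lam i `^ alpha) * e i x ^+ 2)%:E <= (A ^+ 2)%:E)%E)].
have key : forall A, S A ->
    (Linf_norm mu (f_nu mu lam e phi nu f_rho) <= (A * c)%:E)%E.
  move=> A [A0 hae]; apply/ess_supP; apply: filterS hae => x hx.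
  have hl : forall n, \sum_(0 <= i < n) lam i `^ alpha * e i x ^+ 2 <= A ^+ 2.
    move=> n; rewrite -lee_fin -sumEFin; apply: le_trans hx.
    apply: nneseries_lim_ge => i _ _; rewrite lee_fin.
    by apply: mulr_ge0; [exact: powR_ge0 | exact: sqr_ge0].
  have hw : forall n, \sum_(0 <= i < n) w i x ^+ 2 <= K ^+ 2 * A ^+ 2.
    move=> n; apply: le_trans; first by apply: ler_sum => i _; exact: wb.
    by rewrite -mulr_sumr ler_wpM2l // sqr_ge0.
  have [_ hlim] := @abs_series_bound R (fun i => a i * w i x) (Rad * (K * A))
    (fun n => @sum_bound R a (fun i => w i x) Rad K A n HRad K0 A0 ha hw).
  rewrite /= lee_fin fnuE; apply: le_trans hlim _.
  by rewrite /K /c le_eqVlt; apply/orP; left; apply/eqP; ring.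
have [Minf|Mfin] := eqVneq (M_emb mu lam e alpha) +oo%E.
  by rewrite Minf gt0_mulye ?lte_fin // leey.
have Sne : S !=set0.
  apply/set0P/negP => /eqP S0; apply/negP: Mfin; apply/negPn/eqP.
  by rewrite /M_emb -/S S0 image_set0 ereal_inf0.
have Sinf : M_emb mu lam e alpha = (inf S)%:E.
  rewrite /M_emb -/S ereal_inf_EFin //.
  by exists 0 => A [].
rewrite Sinf -EFinM.
move: key; case: (Linf_norm mu (f_nu mu lam e phi nu f_rho)) => [l| |] key.
- rewrite lee_fin -ler_pdivrMr //; apply: lb_le_inf => // A SA.
  by rewrite ler_pdivrMr // -lee_fin key.
- by case: Sne => A /key; rewrite leye_eq.
- exact: leNye.
Qed.
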